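(* Let $\alpha\in(0,1)$ and $\gamma_n=\alpha n$ for each $n$, and let $\lambda_n$ satisfy $\lambda_n=o(n)$ and $\lambda_n=\omega(1)$. Let $K:\mathbb{N}_0\to\mathbb{N}_0$, $n\mapsto K_n$, be a scaling and let \[ r_4(\alpha,\lambda_n) = 1+\frac{\log\!\left(1+\frac{n\alpha}{\lambda_n}\right)+\alpha+\log(1-\alpha)}{\frac{1-\alpha}{2}-\log\!\left(\frac{1+\alpha}{2}\right)}. \] If $K_n > r_4(\alpha,\lambda_n)$ for all $n$, then \[ \lim_{n\to\infty} \mathbb{P}\big[\,|C_{max}(n,K_n,\gamma_n)| > n-\gamma_n-\lambda_n\,\big] = 1. \]
   Context: Random K-out graph $\mathbb{H}(n;K_n)$: on vertex set $V=\{v_1,\dots,v_n\}$ with labels $\mathcal{N}=\{1,\dots,n\}$, each node $v_i$ independently selects a set $\Gamma_{n,i}\subseteq \mathcal{N}\setminus\{i\}$ of $K_n$ distinct labels uniformly at random (the sets $\Gamma_{n,1},\dots,\Gamma_{n,n}$ are mutually independent). Distinct nodes $v_i,v_j$ are adjacent if $j\in\Gamma_{n,i}$ or $i\in\Gamma_{n,j}$ (undirected graph). The graph $\mathbb{H}(n;K_n,\gamma_n)$ is obtained by choosing a set $D\subset V$ of $\gamma_n$ nodes uniformly at random and deleting them: it has vertex set $R=V\setminus D$, and two distinct vertices of $R$ are adjacent iff they are adjacent in $\mathbb{H}(n;K_n)$. $C_{max}(n,K_n,\gamma_n)$ denotes the vertex set of a largest connected component of $\mathbb{H}(n;K_n,\gamma_n)$.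 $\log$ is the natural logarithm; Landau notation is as $n\to\infty$. *)

(* Defs.v *)
From HB Require Import structures.
From mathcomp Require Import all_boot all_order all_algebra.
From mathcomp Require Import all_classical all_reals all_analysis.
Set Implicit Arguments. Unset Strict Implicit. Unset Printing Implicit Defensive.
Import Order.TTheory GRing.Theory Num.Theory.
Local Open Scope ring_scope.

(* An outcome of the experiment defining H(n;K,gamma):
   - Gam : for every node i (labels 'I_n), the set Gamma_{n,i} it selects;
   - D   : the set of deleted nodes. *)
Definition outcome (n : nat) : finType :=
  ({ffun 'I_n -> {set 'I_n}} * {set 'I_n})%type.

(* The uniform distribution
   on admissible outcomes is exactly the law of independent uniform choices
   of Gamma_1,...,Gamma_n and of D. *)
Definition admissible (n K gamma : nat) (w : outcome n) : bool :=
  [forall i : 'I_n, (#|w.1 i| == K) && (i \notin w.1 i)] && (#|w.2| == gamma).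

Definition kout_adj (n : nat) (w : outcome n) : rel 'I_n :=
  fun i j => (i != j) && ((j \in w.1 i) || (i \in w.1 j)).

Definition surv_adj (n : nat) (w : outcome n) : rel 'I_n :=
  fun i j => [&& i \notin w.2, j \notin w.2 & kout_adj w i j].

(* |C_max|: size of a largest connected component of H(n;K,gamma)
   (0 if every vertex is deleted). *)
Definition cmax_size (n : nat) (w : outcome n) : nat :=
  \max_(x : 'I_n | x \notin w.2) #|[set y | connect (surv_adj w) x y]|.

Definition kout_prob (R : realType) (n K gamma : nat) (E : pred (outcome n)) : R :=
  #|[set w : outcome n | admissible K gamma w && E w]|%:R /
  #|[set w : outcome n | admissible K gamma w]|%:R.
Arguments kout_prob R n K gamma E : clear implicits.

(* Main.v *)
Require Import Defs.
From HB Require Import structures.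
From mathcomp Require Import all_boot all_order all_algebra.
From mathcomp Require Import all_classical all_reals all_analysis.
From mathcomp Require Import zify ring lra.
Import Order.TTheory GRing.Theory Num.Theory.
Import numFieldNormedType.Exports.
Set Implicit Arguments. Unset Strict Implicit. Unset Printing Implicit Defensive.
Lemma card_fam (n : nat) (F : 'I_n -> {set {set 'I_n}}) :
  #|[set f : {ffun 'I_n -> {set 'I_n}} | [forall i, f i \in F i]]| = \prod_i #|F i|.
Proof.
have := card_family (fun i : 'I_n => mem (F i)).
have -> : foldr muln 1 [seq #|mem (F x)| | x : 'I_n] = \prod_i #|F i|.
  rewrite /image_mem foldr_map -big_enum /=.
  elim: (enum _) => [|x s IH]; by rewrite ?big_nil ?big_cons //= IH.
move=> <-; apply: eq_card => f; rewrite inE; apply/forallP/familyP => H i; exact: H.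
Qed.

Lemma card_bigcup_le (T I : finType) (P : pred I) (F : I -> {set T}) :
  #|\bigcup_(i | P i) F i| <= \sum_(i | P i) #|F i|.
Proof.
elim/big_ind2: _ => //; first by rewrite cards0.
move=> A a B b HA HB; apply: leq_trans (leq_card_setU a b).1 _.
exact: leq_add.
Qed.

Lemma ffact_ratio a b K : a <= b -> a ^_ K * b.+1 ^ K <= b ^_ K * a.+1 ^ K.
Proof.
move=> ab; elim: K => [|K IH]; first by rewrite !ffactn0.
rewrite !ffactnSr !expnS.
have h : (a - K) * b.+1 <= (b - K) * a.+1.
  case: (leqP K a) => hK; last by rewrite (_ : a - K = 0) //; lia.
  nia.
have := leq_mul IH h.
by rewrite !mulnA; congr (_ <= _); rewrite -!mulnA; congr (_ * _); 
  rewrite mulnC -!mulnA; congr (_ * _); rewrite mulnC.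
Qed.

Lemma bin_ratio a b K : a <= b -> 'C(a, K) * b.+1 ^ K <= 'C(b, K) * a.+1 ^ K.
Proof.
move=> ab; have := ffact_ratio K ab; rewrite -!bin_ffact.
rewrite mulnAC [X in _ <= X]mulnAC leq_pmul2r //; exact: fact_gt0.
Qed.

Section Count.
Variables (n K g : nat).

Definition sepb (w : outcome n) (S : {set 'I_n}) : bool :=
  [forall i, forall j, [&& i \in S, j \notin S & j \notin w.2] ==> ~~ kout_adj w i j].

Definition Bset (S D0 : {set 'I_n}) (i : 'I_n) : {set 'I_n} :=
  if i \in S then (D0 :|: S) :\ i else if i \in D0 then [set~ i] else (~: S) :\ i.

Definition Fam (S D0 : {set 'I_n}) : {set outcome n} :=
  finset.setX [set f : {ffun 'I_n -> {set 'I_n}} | [forall i,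
     f i \in [set X : {set 'I_n} | (X \subset Bset S D0 i) && (#|X| == K)]]] [set D0].

Lemma card_Fam S D0 : #|Fam S D0| = \prod_i 'C(#|Bset S D0 i|, K).
Proof.
rewrite cardsX cards1 muln1 card_fam; apply: eq_bigr => i _.
exact: cards_draws.
Qed.

Lemma card_adm : #|[set w : outcome n | admissible K g w]| = 'C(n.-1, K) ^ n * 'C(n, g).
Proof.
have -> : [set w : outcome n | admissible K g w] = finset.setX [set f : {ffun 'I_n -> {set 'I_n}} | [forall i,
     f i \in [set X : {set 'I_n} | (X \subset [set~ i]) && (#|X| == K)]]] [set D : {set 'I_n} | #|D| == g].
  apply/setP => -[f D]; rewrite !inE /admissible /=; congr (_ && _).
  apply: eq_forallb => i; rewrite inE andbC; congr (_ && _).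
  apply/idP/idP => [ni|/fintype.subsetP h]; last by apply/negP => iX; have := h i iX; rewrite setC11.
  apply/fintype.subsetP => j jX; rewrite in_setC1; apply: contraNneq ni => e; by move: jX; rewrite e.
rewrite cardsX card_draws card_ord card_fam.
rewrite (eq_bigr (fun _ => 'C(n.-1, K))) ?prod_nat_const ?card_ord // => i _.
by rewrite cards_draws cardsC1 card_ord.
Qed.

Lemma sep_Fam w S : admissible K g w -> sepb w S -> S \subset ~: w.2 ->
  w \in Fam S w.2.
Proof.
move=> /andP[/forallP adm _] /forallP sep sD; rewrite /Fam; case: w adm sep sD => f D adm sep sD; rewrite finset.in_setX !inE eqxx andbT /=.
apply/forallP => i; rewrite inE; have /andP[-> ni] := adm i; rewrite andbT.
apply/fintype.subsetP => j jw; have ij : i != j by apply: contraNneq ni => e; move: jw; rewrite -e.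
rewrite /Bset; case: ifP => iS.
  rewrite !inE eq_sym ij /=; apply/negPn/negP; rewrite negb_or => /andP[jD jS].
  have := forallP (sep i) j; rewrite iS jS jD /= /kout_adj ij jw /=; by [].
case: ifP => iD; first by rewrite !inE eq_sym ij.
rewrite !inE eq_sym ij /=; apply/negP => jS.
have := forallP (sep j) i; rewrite jS iS iD /= /kout_adj eq_sym ij jw orbT; by [].
Qed.

Lemma card_Bset (S D0 : {set 'I_n}) (i : 'I_n) : S \subset ~: D0 -> #|D0| = g ->
  #|Bset S D0 i| = if i \in S then (g + #|S|).-1 else if i \in D0 then n.-1
                   else (n - #|S|).-1.
Proof.
move=> sD hD; rewrite /Bset.
have disj : #|D0 :&: S| = 0.
  apply/eqP; rewrite cards_eq0; apply/eqP/setP => x; rewrite !inE.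
  apply/negP => /andP[xD xS]; have := fintype.subsetP sD x xS; by rewrite inE xD.
case: ifP => iS.
  have := cardsD1 i (D0 :|: S); rewrite !inE iS orbT cardsU disj hD subn0 add1n.
  by move=> ->.
case: ifP => iD; first by rewrite cardsC1 card_ord.
have := cardsD1 i (~: S); rewrite !inE iS /= add1n => e.
have e2 : #|S| + #|~: S| = n by rewrite cardsC card_ord.
have -> : n - #|S| = #|~: S| by lia.
by rewrite e.
Qed.

End Count.

Section Graph.
Variables (n : nat) (w : outcome n).

Definition comp (x : 'I_n) : {set 'I_n} := [set y | connect (surv_adj w) x y].

Lemma kout_adjC i j : kout_adj w i j = kout_adj w j i.
Proof. by rewrite /kout_adj eq_sym orbC. Qed.

Lemma comp_sub x : x \notin w.2 -> comp x \subset ~: w.2.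
Proof.
move=> xD; apply/fintype.subsetP => y; rewrite !inE => cxy.
have cl : closed_mem (surv_adj w) (mem [pred v | v \notin w.2]).
  by move=> a b /and3P[aD bD _]; rewrite !inE aD bD.
by have := closed_connect cl cxy; rewrite !inE xD => <-.
Qed.

Lemma comp_sep x : x \notin w.2 -> sepb w (comp x).
Proof.
move=> xD; apply/forallP => i; apply/forallP => j; apply/implyP => /and3P[iC jC jD].
apply/negP => adj; move: jC; rewrite !inE => /negP; apply.
have iD : i \notin w.2 by have := fintype.subsetP (comp_sub xD) i iC; rewrite inE.
move: iC; rewrite inE => ci; apply: connect_trans ci _; apply: connect1.
by rewrite /surv_adj iD jD adj.
Qed.

Lemma sep_union S T : sepb w S -> sepb w T -> sepb w (S :|: T).
Proof.
move=> /forallP hS /forallP hT; apply/forallP => i; apply/forallP => j.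
apply/implyP; rewrite !inE negb_or => /and3P[/orP[iS|iT] /andP[jS jT] jD].
  by have := forallP (hS i) j; rewrite iS jS jD.
by have := forallP (hT i) j; rewrite iT jT jD.
Qed.

Lemma sep_compl S : sepb w S -> sepb w (~: w.2 :\: S).
Proof.
move=> /forallP hS; apply/forallP => i; apply/forallP => j.
apply/implyP; rewrite !inE negb_and !negbK => /and3P[/andP[iS iD] jc jD].
have jS : j \in S by move: jc jD; case: (j \in S); case: (j \in w.2).
by have := forallP (hS j) i; rewrite jS iS iD kout_adjC.
Qed.

Lemma comp_le_cmax x : x \notin w.2 -> #|comp x| <= cmax_size w.
Proof. move=> xD; rewrite /cmax_size. exact: (@leq_bigmax_cond _ (fun x => x \notin w.2) (fun x => #|comp x|) x xD). Qed.

Lemma sep0 : sepb w (@finset.set0 _).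
Proof. by apply/forallP => i; apply/forallP => j; rewrite inE. Qed.

End Graph.

Local Open Scope ring_scope.

Lemma bad_sep (R : realType) (n g : nat) (w : outcome n) (lam : R) :
  #|w.2| = g -> 0 < lam -> 3 * lam <= (n - g)%:R ->
  ~~ (n%:R - g%:R - lam < (cmax_size w)%:R) ->
  exists S : {set 'I_n}, [/\ S \subset ~: w.2, sepb w S, lam <= #|S|%:R & (2 * #|S| <= n - g)%N].
Proof.
move=> hD lam0 h3 hc.
have gn : (g <= n)%N by rewrite -hD -[X in (_ <= X)%N]card_ord max_card.
have hr : #|~: w.2| = (n - g)%N.
  have e := cardsC w.2; rewrite card_ord hD in e; lia.
have hc' : (cmax_size w)%:R <= (n - g)%:R - lam.
  by rewrite natrB // ; move: hc; rewrite -leNgt.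
have [T [TD Tsep Tl Tu]] : exists T : {set 'I_n}, [/\ T \subset ~: w.2, sepb w T, lam <= #|T|%:R
     & #|T|%:R <= (n - g)%:R - lam].
  pose Cl := fun T : {set 'I_n} => [&& T \subset ~: w.2, sepb w T & #|T|%:R < lam].
  have Cl0 : Cl (@finset.set0 _) by rewrite /Cl finset.sub0set sep0 cards0 lam0.
  case: (@arg_maxnP _ _ Cl (fun T => #|T|) Cl0) => S0 /and3P[S0D S0sep S0l] maxS0.
  have : ~~ (~: w.2 \subset S0).
    apply/negP => /subset_leq_card; rewrite hr => h.
    have : (n - g)%:R <= #|S0|%:R :> R by rewrite ler_nat.
    lra.
  case/fintype.subsetPn => x xR xS0.
  have xD : x \notin w.2 by move: xR; rewrite inE.
  set C := comp w x.
  have CD := comp_sub xD; have Csep := comp_sep xD; have Cm := comp_le_cmax xD.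
  have Cm' : #|C|%:R <= (n - g)%:R - lam :> R by apply: le_trans hc'; rewrite ler_nat.
  have xC : x \in C by rewrite inE connect0.
  have S1D : S0 :|: C \subset ~: w.2 by rewrite finset.subUset S0D CD.
  have S1sep := sep_union S0sep Csep.
  have S1gt : (#|S0| < #|S0 :|: C|)%N.
    apply: proper_card; apply/properP; split; first exact: finset.subsetUl.
    by exists x; rewrite // inE xC orbT.
  have S1l : lam <= #|S0 :|: C|%:R.
    rewrite leNgt; apply/negP => h.
    have := maxS0 (S0 :|: C); rewrite /Cl S1D S1sep h => /(_ isT).
    move=> h'; have := leq_trans S1gt h'; by rewrite ltnn.
  case: (lerP #|S0 :|: C|%:R ((n - g)%:R - lam)) => hS1.
    by exists (S0 :|: C).
  exists C; split => //.
  have h1 : (#|S0 :|: C| <= #|S0| + #|C|)%N := (leq_card_setU S0 C).1.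
  have : #|S0 :|: C|%:R <= #|S0|%:R + #|C|%:R :> R by rewrite -natrD ler_nat.
  lra.
case: (leqP (2 * #|T|) (n - g)) => h2; first by exists T.
exists (~: w.2 :\: T).
have cT : #|~: w.2 :\: T| = (n - g - #|T|)%N.
  by rewrite cardsD hr (finset.setIidPr TD).
have Tn : (#|T| <= n - g)%N by rewrite -hr subset_leq_card.
split.
- exact: finset.subsetDl.
- exact: sep_compl.
- rewrite cT natrB //; lra.
- rewrite cT; lia.
Qed.

Lemma geom_le (R : realType) (t : R) N : 0 <= t <= 1/2 ->
  \sum_(i < N) t ^+ i.+1 <= 2 * t.
Proof.
move=> /andP[t0 t1]; elim: N => [|N IH]; first by rewrite big_ord0; lra.
rewrite big_ord_recl /=.
have -> : \sum_(i < N) t ^+ (bump 0 i).+1 = t * \sum_(i < N) t ^+ i.+1.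
  by rewrite mulr_sumr; apply: eq_bigr => i _; rewrite exprS.
have : t * \sum_(i < N) t ^+ i.+1 <= t * (2 * t) by rewrite ler_wpM2l.
rewrite expr1; nra.
Qed.

Lemma ratio_le (R : realType) (a b K : nat) : (a <= b)%N -> (K <= b)%N ->
  'C(a, K)%:R / 'C(b, K)%:R <= (a.+1%:R / b.+1%:R) ^+ K :> R.
Proof.
move=> ab Kb.
have c0 : 0 < 'C(b, K)%:R :> R by rewrite ltr0n bin_gt0.
rewrite expr_div_n ler_pdivrMr // mulrC mulrA ler_pdivlMr ?exprn_gt0 ?ltr0n //.
by rewrite -!natrX -!natrM ler_nat bin_ratio.
Qed.

Lemma sum_sets (R : realType) n (B : {set 'I_n}) (Q : pred nat) (h : nat -> R) :
  \sum_(S : {set 'I_n} | (S \subset B) && Q #|S|) h #|S| =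
  \sum_(m < n.+1 | Q m) 'C(#|B|, m)%:R * h m.
Proof.
rewrite (partition_big (fun S : {set 'I_n} => (inord #|S| : 'I_n.+1)) (fun m : 'I_n.+1 => Q m)).
  apply: eq_bigr => m Qm.
  have Sn : forall S : {set 'I_n}, (#|S| <= n)%N.
    by move=> S; rewrite -[X in (_ <= X)%N]card_ord max_card.
  rewrite (eq_bigl (fun S => S \in [set S : {set 'I_n} | (S \subset B) && (#|S| == m)])).
    rewrite (eq_bigr (fun _ => h m)); last first.
      by move=> S; rewrite inE => /andP[_ /eqP ->].
    by rewrite sumr_const cards_draws mulr_natl.
  move=> S; rewrite inE; apply/idP/idP.
    move=> /andP[/andP[-> _] /eqP <-]; by rewrite /= inordK // ltnS.
  by move=> /andP[-> /eqP e] /=; rewrite e Qm /= inord_val.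
by move=> S /andP[_ QS]; rewrite inordK // ltnS -[X in (_ <= X)%N]card_ord max_card.
Qed.

Lemma prod_bound (R : realType) n K g (S D0 : {set 'I_n}) :
  (K < n)%N -> S \subset ~: D0 -> #|D0| = g -> (1 <= #|S|)%N -> (2 * #|S| <= n - g)%N ->
  (\prod_i 'C(#|Bset S D0 i|, K))%:R <=
    'C(n.-1, K)%:R ^+ n * ((((g + #|S|)%:R / n%:R) ^+ K) ^+ #|S| *
     (((n - #|S|)%:R / n%:R) ^+ K) ^+ (n - g - #|S|)) :> R.
Proof.
move=> Kn SD hD m1 m2.
set m := #|S|; set c : R := 'C(n.-1, K)%:R.
set p : R := ((g + m)%:R / n%:R) ^+ K; set q : R := ((n - m)%:R / n%:R) ^+ K.
have c0 : 0 < c by rewrite ltr0n bin_gt0; lia.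
have gn : (g <= n)%N by rewrite -hD -[X in (_ <= X)%N]card_ord max_card.
rewrite natr_prod.
have -> : \prod_i ('C(#|Bset S D0 i|, K)%:R : R) =
          c ^+ n * \prod_i ('C(#|Bset S D0 i|, K)%:R / c).
  rewrite -[X in c ^+ X](card_ord n) -prodr_const -big_split /=.
  by apply: eq_bigr => i _; rewrite mulrC divfK // gt_eqF.
rewrite ler_pM2l ?exprn_gt0 //.
pose h i := if i \in S then p else if i \in D0 then 1 else q.
apply: (@le_trans _ _ (\prod_i h i)).
  apply: ler_prod => i _; apply/andP; split.
    by rewrite divr_ge0 ?ler0n ?ltW.
  rewrite /h (card_Bset i SD hD); case: ifP => iS.
    have := @ratio_le R (g + m).-1 n.-1 K; rewrite !prednK; try lia.
    by move=> H; apply: H; lia.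
  case: ifP => iD; first by rewrite divff // gt_eqF.
  have := @ratio_le R (n - m).-1 n.-1 K; rewrite !prednK; try lia.
  by move=> H; apply: H; lia.
rewrite (bigID (fun i => i \in S)) /=.
rewrite (eq_bigr (fun _ => p)); last by move=> i iS; rewrite /h iS.
rewrite prodr_const; apply: ler_wpM2l; first by rewrite exprn_ge0 // /p exprn_ge0 // divr_ge0.
rewrite (bigID (fun i => i \in D0)) /= big1 ?mul1r; last first.
  by move=> i /andP[iS iD]; rewrite /h (negbTE iS) iD.
rewrite (eq_bigl (fun i => i \in ~: (S :|: D0))); last first.
  by move=> i; rewrite !inE negb_or.
rewrite (eq_bigr (fun _ => q)); last first.
  by move=> i; rewrite !inE negb_or => /andP[iS iD]; rewrite /h (negbTE iS) (negbTE iD).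
rewrite prodr_const.
have -> : #|~: (S :|: D0)| = (n - g - m)%N.
  have e := cardsC (S :|: D0); rewrite card_ord cardsU hD in e.
  have disj : #|S :&: D0| = 0%N.
    apply/eqP; rewrite cards_eq0; apply/eqP/setP => x; rewrite !inE.
    apply/negP => /andP[xS xD]; have := fintype.subsetP SD x xS; by rewrite inE xD.
  rewrite disj subn0 in e; rewrite -/m in e; lia.
by [].
Qed.

Definition tau (R : realType) (n K g m : nat) : R :=
  (((g + m)%:R / n%:R) ^+ K) ^+ m * (((n - m)%:R / n%:R) ^+ K) ^+ (n - g - m).

Lemma finite_bound (R : realType) (n K g : nat) (lam t : R) :
  (K < n)%N -> (g <= n)%N -> 0 < lam -> 3 * lam <= (n - g)%:R -> 0 <= t <= 1/2 ->
  (forall m : nat, (1 <= m)%N -> lam <= m%:R -> (2 * m <= n - g)%N ->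
      'C(n - g, m)%:R * tau R n K g m <= t ^+ m) ->
  1 - 2 * t <= kout_prob R n K g (fun w => n%:R - g%:R - lam < (cmax_size w)%:R).
Proof.
move=> Kn gn lam0 h3 ht hm.
set E := (fun w : outcome n => n%:R - g%:R - lam < (cmax_size w)%:R).
set A := [set w : outcome n | admissible K g w].
set Bd := [set w : outcome n | admissible K g w && ~~ E w].
set Ev := [set w : outcome n | admissible K g w && E w].
set c : R := 'C(n.-1, K)%:R.
have c0 : 0 < c by rewrite ltr0n bin_gt0; lia.
have cA : #|A| = ('C(n.-1, K) ^ n * 'C(n, g))%N by rewrite card_adm.
have A0 : (0 < #|A|)%N by rewrite cA muln_gt0 expn_gt0 !bin_gt0; apply/andP; split => //; lia.
have hsplit : (#|Ev| + #|Bd|)%N = #|A|.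
  rewrite -(cardsID [set w : outcome n | E w] A); congr (_ + _)%N; apply: eq_card => w;
  by rewrite /Ev /Bd /A !inE; case: (admissible K g w); case: (E w).
set Q := fun m : nat => (lam <= m%:R) && (2 * m <= n - g)%N.
have sub : Bd \subset \bigcup_(D0 : {set 'I_n} | #|D0| == g)
                \bigcup_(S : {set 'I_n} | (S \subset ~: D0) && Q #|S|) Fam K S D0.
  apply/fintype.subsetP => w; rewrite inE => /andP[adm bad].
  have hD : #|w.2| = g by move: adm => /andP[_ /eqP].
  have [S [SD Ssep Sl S2]] := bad_sep hD lam0 h3 bad.
  apply/bigcupP; exists w.2; first by rewrite hD.
  apply/bigcupP; exists S; first by rewrite SD /Q Sl S2.
  exact: (sep_Fam adm Ssep SD).
have cB := leq_trans (subset_leq_card sub) (card_bigcup_le _ _).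
have cB' : (#|Bd| <= \sum_(D0 : {set 'I_n} | #|D0| == g)
                \sum_(S : {set 'I_n} | (S \subset ~: D0) && Q #|S|) #|Fam K S D0|)%N.
  by apply: leq_trans cB _; apply: leq_sum => D0 _; exact: card_bigcup_le.
have key : #|Bd|%:R <= 'C(n, g)%:R * (c ^+ n * (2 * t)) :> R.
  have := cB'; rewrite -(ler_nat R) => cBr; apply: le_trans cBr _.
  rewrite natr_sum.
  apply: (@le_trans _ _ (\sum_(D0 : {set 'I_n} | #|D0| == g) c ^+ n * (2 * t))); last first.
    rewrite (eq_bigl (fun D0 => D0 \in [set D0 : {set 'I_n} | #|D0| == g])); last first.
      by move=> D0; rewrite inE.
    rewrite sumr_const card_draws card_ord; rewrite [X in _ <= X]mulr_natl; by [].
  apply: ler_sum => D0 /eqP hD.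
  rewrite natr_sum.
  apply: (@le_trans _ _ (\sum_(S : {set 'I_n} | (S \subset ~: D0) && Q #|S|) c ^+ n * tau R n K g #|S|)).
    apply: ler_sum => S /andP[SD /andP[Sl S2]].
    rewrite card_Fam; apply: prod_bound => //.
    have : (0 : R) < #|S|%:R by lra.
    by rewrite ltr0n.
  rewrite -mulr_sumr ler_pM2l ?exprn_gt0 //.
  rewrite (sum_sets _ _ (fun m => tau R n K g m)).
  have cD : #|~: D0| = (n - g)%N.
    have e := cardsC D0; rewrite card_ord hD in e; lia.
  rewrite cD.
  apply: (@le_trans _ _ (\sum_(m < n.+1 | Q m) t ^+ m)).
    apply: ler_sum => m /andP[ml m2]; apply: hm => //.
    have : (0 : R) < m%:R by lra.
    by rewrite ltr0n.
  apply: (@le_trans _ _ (\sum_(m < n.+1 | (0 < m)%N) t ^+ m)).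
    rewrite [X in _ <= X]big_mkcond [X in X <= _]big_mkcond /=.
    apply: ler_sum => m _; case: ifP => Qm.
      have -> : (0 < m)%N.
        move: Qm => /andP[ml _]; have : (0 : R) < m%:R by lra.
        by rewrite ltr0n.
      by [].
    case: ifP => // _; rewrite exprn_ge0 //; by case/andP: ht.
  rewrite big_mkcond big_ord_recl /=.
  rewrite add0r; apply: (@le_trans _ _ (\sum_(i < n) t ^+ i.+1)); last exact: geom_le.
  by apply: ler_sum => i _.
rewrite /kout_prob.
have -> : [set w | admissible K g w && E w] = Ev by [].
rewrite -/A.
have Ar : (0 : R) < #|A|%:R by rewrite ltr0n.
have -> : #|Ev|%:R = #|A|%:R - #|Bd|%:R :> R.
  by rewrite -hsplit natrD addrK.
rewrite ler_pdivlMr // mulrBl mul1r.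
have : #|Bd|%:R <= 2 * t * #|A|%:R :> R.
  have -> : 2 * t * #|A|%:R = 'C(n, g)%:R * (c ^+ n * (2 * t)) :> R.
    by rewrite cA natrM natrX /c; ring.
  exact: key.
lra.
Qed.

Section Analysis.
Variable R : realType.
Local Open Scope ring_scope.

Lemma pow_le (x y : R) k : 0 <= x -> x <= y -> x ^+ k <= y ^+ k.
Proof.
move=> x0 xy; apply: lerXn2r => //; rewrite nnegrE //; exact: le_trans xy.
Qed.

Lemma e_ge2 : 2 <= expR 1 :> R.
Proof. have := @expR_ge1Dx R 1; lra. Qed.

Lemma succ_pow (m : nat) : m.+1%:R ^+ m <= expR 1 * m%:R ^+ m :> R.
Proof.
case: m => [|m]; first by rewrite !expr0 mulr1; have := e_ge2; lra.
set k := m.+1.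
have k0 : (0 : R) < k%:R by rewrite ltr0n.
have -> : k.+1%:R = k%:R * (1 + k%:R^-1) :> R.
  by rewrite mulrDr mulr1 mulfV ?gt_eqF // -natr1.
rewrite exprMn mulrC; apply: ler_wpM2r; first by rewrite exprn_ge0 ?ltW.
apply: (@le_trans _ _ (expR (k%:R^-1) ^+ k)).
  apply: pow_le; last exact: expR_ge1Dx.
  by rewrite addr_ge0 ?invr_ge0 ?ltW.
by rewrite -expRM_natl mulfV ?gt_eqF.
Qed.

Lemma pow_fact (m : nat) : (m ^ m)%:R <= expR 1 ^+ m * m`!%:R :> R.
Proof.
elim: m => [|m IH]; first by rewrite expr0 mul1r.
rewrite expnS natrM factS natrM exprS.
have e0 : (0 : R) <= expR 1 by exact: expR_ge0.
have h1 : (m.+1 ^ m)%:R <= expR 1 * (m ^ m)%:R :> R by rewrite !natrX succ_pow.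
have h2 : (m.+1 ^ m)%:R <= expR 1 * (expR 1 ^+ m * m`!%:R) :> R.
  by apply: le_trans h1 _; apply: ler_wpM2l.
have : m.+1%:R * (m.+1 ^ m)%:R <= m.+1%:R * (expR 1 * (expR 1 ^+ m * m`!%:R)) :> R.
  by apply: ler_wpM2l.
move=> h; apply: le_trans h _; rewrite le_eqVlt; apply/orP; left; apply/eqP; ring.
Qed.

Lemma ffact_le_exp r m : (r ^_ m <= r ^ m)%N.
Proof.
elim: m => [|m IH]; first by rewrite ffactn0.
rewrite ffactnSr expnS mulnC; exact: leq_mul (leq_subr _ _) IH.
Qed.

Lemma bin_bound (r m : nat) : (1 <= m)%N ->
  'C(r, m)%:R <= (expR 1 * r%:R / m%:R) ^+ m :> R.
Proof.
move=> m1.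
have m0 : (0 : R) < m%:R by rewrite ltr0n.
have f0 : (0 : R) < m`!%:R by rewrite ltr0n fact_gt0.
have mm0 : (0 : R) < (m ^ m)%:R by rewrite ltr0n expn_gt0 m1.
have h1 : 'C(r, m)%:R * m`!%:R <= (r ^ m)%:R :> R.
  by rewrite -natrM ler_nat bin_ffact ffact_le_exp.
rewrite expr_div_n exprMn ler_pdivlMr ?exprn_gt0 //.
have := pow_fact m => h2.
have : 'C(r, m)%:R * (m ^ m)%:R <= 'C(r, m)%:R * (expR 1 ^+ m * m`!%:R) :> R.
  by apply: ler_wpM2l; rewrite ?ler0n.
move=> h3; rewrite -natrX; apply: le_trans h3 _.
rewrite mulrCA; apply: ler_wpM2l; first by rewrite exprn_ge0 ?expR_ge0.
by rewrite -natrX.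
Qed.

End Analysis.

Section PerM.
Variable R : realType.
Local Open Scope ring_scope.

Definition tn (al lam : R) (n K : nat) : R :=
  expR 1 * (n%:R / lam) * (((al + (1 - al) / 4) * expR (- ((1 - al) / 2))) ^+ K) +
  expR 1 * (4 / (1 - al)) * (((1 + al) / 2 * expR (- ((1 - al) / 2))) ^+ K).

Lemma per_m (al lam : R) (n K g m : nat) :
  0 < al < 1 -> 0 < lam -> (0 < n)%N -> g%:R <= al * n%:R -> (g <= n)%N ->
  (1 <= m)%N -> lam <= m%:R -> (2 * m <= n - g)%N ->
  'C(n - g, m)%:R * tau R n K g m <= (tn al lam n K) ^+ m.
Proof.
move=> /andP[a0 a1] lam0 n0 gal gn m1 lm m2.
set c := expR (- ((1 - al) / 2)).
have c0 : 0 < c by exact: expR_gt0.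
have nR : (0 : R) < n%:R by rewrite ltr0n.
have mR : (0 : R) < m%:R by rewrite ltr0n.
have mn : (m <= n)%N by lia.
have rR : (n - g)%:R = n%:R - g%:R :> R by rewrite natrB.
have rmR : (n - g - m)%:R = n%:R - g%:R - m%:R :> R by rewrite !natrB //; lia.
have m2R : 2 * m%:R <= n%:R - g%:R :> R.
  have : ((2 * m)%:R <= (n - g)%:R :> R) by rewrite ler_nat.
  by rewrite natrM rR.
pose p : R := (g + m)%:R / n%:R.
have p0 : 0 <= p by rewrite divr_ge0 ?ler0n.
have hq : (((n - m)%:R / n%:R) ^+ K) ^+ (n - g - m) <= (c ^+ K) ^+ m.
  rewrite exprAC [X in _ <= X]exprAC; apply: pow_le.
    by rewrite exprn_ge0 // divr_ge0 ?ler0n.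
  have e1 : (n - m)%:R / n%:R = 1 + (- (m%:R / n%:R)) :> R.
    by rewrite natrB // mulrBl divff ?gt_eqF.
  apply: (@le_trans _ _ (expR (- (m%:R / n%:R)) ^+ (n - g - m))).
    apply: pow_le; first by rewrite divr_ge0 ?ler0n.
    by rewrite e1; exact: expR_ge1Dx.
  rewrite -expRM_natr -expRM_natl ler_expR rmR.
  rewrite mulNr mulrN lerN2.
  have : (1 - al) / 2 * n%:R <= n%:R - g%:R - m%:R by nra.
  move=> h; rewrite mulrAC ler_pdivlMr //; nra.
have base0 : 0 <= expR 1 * (n - g)%:R / m%:R :> R.
  by rewrite divr_ge0 ?mulr_ge0 ?expR_ge0 ?ler0n.
apply: (@le_trans _ _ (((expR 1 * (n - g)%:R / m%:R : R) * (p * c) ^+ K) ^+ m)).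
  have -> : ((expR 1 * (n - g)%:R / m%:R : R) * (p * c) ^+ K) ^+ m =
     (expR 1 * (n - g)%:R / m%:R) ^+ m * ((p ^+ K) ^+ m * (c ^+ K) ^+ m).
    move: (expR 1 * (n - g)%:R / m%:R : R) => E.
    by rewrite !exprMn.
  rewrite /tau -/p.
  apply: ler_pM; first by rewrite ler0n.
  - by rewrite mulr_ge0 ?exprn_ge0.
  - exact: bin_bound.
  apply: ler_wpM2l; first by rewrite exprn_ge0 // exprn_ge0.
  exact: hq.
apply: pow_le; first by rewrite mulr_ge0 // exprn_ge0 // mulr_ge0 // ltW.
have t1 : 0 <= expR 1 * (n%:R / lam) * (((al + (1 - al) / 4) * c) ^+ K).
  apply: mulr_ge0; first by apply: mulr_ge0; [exact: expR_ge0 | rewrite divr_ge0 ?ler0n ?ltW].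
  by apply: exprn_ge0; apply: mulr_ge0; [lra | exact: ltW].
have t2 : 0 <= expR 1 * (4 / (1 - al)) * (((1 + al) / 2 * c) ^+ K).
  apply: mulr_ge0; first by apply: mulr_ge0; [exact: expR_ge0 | apply: divr_ge0; lra].
  by apply: exprn_ge0; apply: mulr_ge0; [lra | exact: ltW].
rewrite /tn -/c.
have gr : (n - g)%:R <= n%:R :> R by rewrite ler_nat leq_subr.
have -> : expR 1 * (n - g)%:R / m%:R = expR 1 * ((n - g)%:R / m%:R) :> R by rewrite mulrA.
have rm0 : 0 <= (n - g)%:R / m%:R :> R by rewrite divr_ge0 ?ler0n.
have pc0 : 0 <= (p * c) ^+ K by apply: exprn_ge0; apply: mulr_ge0 => //; exact: ltW.
case: (lerP (m%:R) ((1 - al) / 4 * n%:R)) => hm.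
- apply: (@le_trans _ _ (expR 1 * (n%:R / lam) * (((al + (1 - al) / 4) * c) ^+ K))); last by rewrite lerDl.
  have hr : (n - g)%:R / m%:R <= n%:R / lam.
    rewrite ler_pdivrMr // mulrAC ler_pdivlMr //.
    apply: ler_pM; [exact: ler0n | exact: ltW | exact: gr | exact: lm].
  have hpc : (p * c) ^+ K <= ((al + (1 - al) / 4) * c) ^+ K.
    apply: pow_le; first by apply: mulr_ge0 => //; exact: ltW.
    apply: ler_wpM2r; first exact: ltW.
    rewrite /p ler_pdivrMr // natrD; nra.
  apply: ler_pM => //.
  by apply: ler_wpM2l => //; exact: expR_ge0.
- apply: (@le_trans _ _ (expR 1 * (4 / (1 - al)) * (((1 + al) / 2 * c) ^+ K))); last by rewrite lerDr.
  have hr : (n - g)%:R / m%:R <= 4 / (1 - al).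
    rewrite ler_pdivrMr // mulrC mulrA ler_pdivlMr; last lra.
    nra.
  have hpc : (p * c) ^+ K <= ((1 + al) / 2 * c) ^+ K.
    apply: pow_le; first by apply: mulr_ge0 => //; exact: ltW.
    apply: ler_wpM2r; first exact: ltW.
    rewrite /p ler_pdivrMr // natrD; nra.
  apply: ler_pM => //.
  by apply: ler_wpM2l => //; exact: expR_ge0.
Qed.

End PerM.

Section Asym.
Variable R : realType.
Local Open Scope ring_scope.

Definition dd (al : R) := (1 - al) / 2 - ln ((1 + al) / 2).
Definition BB (al : R) := (1 + al) / 2 * expR (- ((1 - al) / 2)).
Definition CC (al : R) := expR (- dd al - al) / ((1 - al) * al).

Lemma dd_gt0 (al : R) : 0 < al < 1 -> 0 < dd al.
Proof.
move=> /andP[a0 a1]; rewrite /dd.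
have : ln ((1 + al) / 2) < 0 by apply: ln_lt0; apply/andP; split; lra.
lra.
Qed.

Lemma BB_eq (al : R) : 0 < al < 1 -> BB al = expR (- dd al).
Proof.
move=> /andP[a0 a1]; rewrite /BB /dd opprB addrC expRD.
rewrite lnK //; rewrite posrE; lra.
Qed.

Lemma BK_bound (al lam : R) (n K : nat) : 0 < al < 1 -> 0 < lam -> (0 < n)%N ->
  (K%:R > 1 + (ln (1 + n%:R * al / lam) + al + ln (1 - al)) / dd al) ->
  BB al ^+ K <= CC al * (lam / n%:R).
Proof.
move=> ha lam0 n0 hK; have /andP[a0 a1] := ha.
have d0 := dd_gt0 ha.
have nR : (0 : R) < n%:R by rewrite ltr0n.
set L := ln (1 + n%:R * al / lam) in hK *.
have x0 : 0 < 1 + n%:R * al / lam by rewrite addr_gt0 // divr_gt0 // mulr_gt0.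
have hK' : K%:R * dd al > dd al + (L + al + ln (1 - al)).
  have h : (L + al + ln (1 - al)) / dd al < K%:R - 1 by lra.
  rewrite ltr_pdivrMr // in h; nra.
rewrite BB_eq // -expRM_natl.
apply: (@le_trans _ _ (expR (- dd al - al - ln (1 - al) - L))).
  rewrite ler_expR; nra.
rewrite !expRD !expRN lnK ?posrE //; last lra.
rewrite lnK ?posrE //.
rewrite /CC.
have -> : expR (- dd al - al) = (expR (dd al))^-1 / expR al by rewrite expRD !expRN.
set E := (expR (dd al))^-1 / expR al.
have E0 : 0 <= E by rewrite divr_ge0 ?invr_ge0 ?expR_ge0.
set y := n%:R * al / lam.
have y0 : 0 < y by rewrite divr_gt0 // mulr_gt0.
have hy : (1 + y)^-1 <= y^-1.
  by rewrite lef_pV2 ?posrE; lra.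
have -> : E / ((1 - al) * al) * (lam / n%:R) = E / (1 - al) * y^-1.
  rewrite /y invf_div; field.
  by apply/and3P; split; rewrite ?gt_eqF //; lra.
apply: ler_wpM2l => //; rewrite divr_ge0 //; lra.
Qed.

End Asym.

Section Asym2.
Variable R : realType.
Local Open Scope ring_scope.

Definition kap (al : R) := (al + (1 - al) / 4) / ((1 + al) / 2).

Lemma kap_bounds (al : R) : 0 < al < 1 -> 0 <= kap al < 1.
Proof.
move=> /andP[a0 a1]; rewrite /kap; apply/andP; split.
  by rewrite divr_ge0 //; lra.
by rewrite ltr_pdivrMr; lra.
Qed.

Lemma BB_bounds (al : R) : 0 < al < 1 -> 0 < BB al <= 1.
Proof.
move=> ha; rewrite BB_eq // expR_gt0 /= -[X in _ <= X]expR0 ler_expR.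
have := dd_gt0 ha; lra.
Qed.

Lemma tn_bound (al lam : R) n K : 0 < al < 1 -> 0 < lam -> (0 < n)%N ->
  BB al ^+ K <= CC al * (lam / n%:R) ->
  tn al lam n K <= expR 1 * CC al * kap al ^+ K +
                   expR 1 * (4 / (1 - al)) * (CC al * (lam / n%:R)).
Proof.
move=> ha lam0 n0 hB; have /andP[a0 a1] := ha.
have nR : (0 : R) < n%:R by rewrite ltr0n.
have B0 : 0 <= BB al ^+ K by rewrite exprn_ge0 //; have /andP[/ltW] := BB_bounds ha.
have k0 : 0 <= kap al ^+ K by rewrite exprn_ge0 //; have /andP[] := kap_bounds ha.
rewrite /tn.
have -> : (al + (1 - al) / 4) * expR (- ((1 - al) / 2)) = kap al * BB al.
  rewrite /kap /BB; field; lra.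
rewrite exprMn; apply: lerD.
  apply: (@le_trans _ _ (expR 1 * (n%:R / lam) * (kap al ^+ K * (CC al * (lam / n%:R))))).
    apply: ler_wpM2l; first by rewrite mulr_ge0 ?expR_ge0 // divr_ge0 ?ler0n ?ltW.
    exact: ler_wpM2l.
  rewrite le_eqVlt; apply/orP; left; apply/eqP; field.
  by apply/andP; split; rewrite gt_eqF.
apply: ler_wpM2l => //; rewrite mulr_ge0 ?expR_ge0 // divr_ge0 //; lra.
Qed.

End Asym2.

Local Open Scope ring_scope.

Lemma kout_prob_le1 (R : realType) n K g (E : pred (outcome n)) : kout_prob R n K g E <= 1.
Proof.
rewrite /kout_prob.
have ab : (#|[set w : outcome n | admissible K g w && E w]| <= #|[set w : outcome n | admissible K g w]|)%N.
  apply: subset_leq_card; apply/fintype.subsetP => w; rewrite !inE => /andP[-> _]; by [].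
case: (posnP #|[set w : outcome n | admissible K g w]|) => [->|b0].
  by rewrite invr0 mulr0.
rewrite ler_pdivrMr ?ltr0n // mul1r ler_nat; exact: ab.
Qed.

Lemma tn_ge0 (R : realType) (al lam : R) n K : 0 < al < 1 -> 0 < lam -> 0 <= tn al lam n K.
Proof.
move=> /andP[a0 a1] lam0; rewrite /tn.
have c0 : (0 : R) <= expR (- ((1 - al) / 2)) by exact: expR_ge0.
apply: addr_ge0; apply: mulr_ge0.
- by rewrite mulr_ge0 ?expR_ge0 // divr_ge0 ?ler0n ?ltW.
- by apply: exprn_ge0; apply: mulr_ge0 => //; lra.
- by rewrite mulr_ge0 ?expR_ge0 // divr_ge0 //; lra.
- by apply: exprn_ge0; apply: mulr_ge0 => //; lra.
Qed.

Unset Implicit Arguments.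
Local Open Scope classical_set_scope.
Local Open Scope ring_scope.

Theorem theorem3p4 (R : realType) (alpha : R) (lambda : nat -> R) (K : nat -> nat) :
  0 < alpha < 1 ->
  lambda =o_\oo (fun n : nat => n%:R : R) ->
  lambda n @[n --> \oo] --> +oo ->
  (\forall n \near \oo, (K n < n)%N) ->
  (forall n : nat,
     (K n)%:R > 1 + (ln (1 + n%:R * alpha / lambda n) + alpha + ln (1 - alpha)) /
                    ((1 - alpha) / 2 - ln ((1 + alpha) / 2))) ->
  kout_prob R n (K n) (Num.truncn (alpha * n%:R))
    (fun w => (cmax_size w)%:R >
              n%:R - (Num.truncn (alpha * n%:R))%:R - lambda n)
    @[n --> \oo] --> (1 : R).
Proof.
move=> ha hlo hinf hK hr4; have /andP[a0 a1] := ha.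
have lo : forall eta : R, 0 < eta -> \forall n \near \oo, lambda n <= eta * n%:R.
  move=> eta eta0; have := (eqoP _ _ _).1 hlo eta eta0; apply: filterS => n h.
  by apply: le_trans (ler_norm _) _; rewrite normr_nat in h.
have lpos : \forall n \near \oo, 1 <= lambda n by exact: ((cvgryPge _).1 hinf 1).
apply/cvgrPdist_le => eps eps0.
have ka := kap_bounds ha; have /andP[ka0 ka1] := ka.
have Bb := BB_bounds ha; have /andP[B0 B1] := Bb.
have CC0 : 0 <= CC alpha.
  by rewrite /CC divr_ge0 ?expR_ge0 // mulr_ge0 //; lra.
set eta := Num.min (eps / 2) (1 / 2).
have eta0 : 0 < eta by rewrite lt_min; apply/andP; split; lra.
have etae : eta <= eps / 2 by rewrite ge_min lexx.
have etah : eta <= 1 / 2 by rewrite ge_min lexx orbT.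
set M1 := expR 1 * CC alpha.
have M10 : 0 <= M1 by rewrite mulr_ge0 ?expR_ge0.
set M2 := expR 1 * (4 / (1 - alpha)).
have M20 : 0 <= M2 by rewrite mulr_ge0 ?expR_ge0 // divr_ge0; lra.
set eta1 := eta / (2 * (M1 + 1)).
have eta10 : 0 < eta1 by rewrite divr_gt0 //; lra.
have M1eta : M1 * eta1 <= eta / 2.
  rewrite /eta1 mulrA ler_pdivrMr; last lra.
  have : M1 * eta <= (M1 + 1) * eta by rewrite ler_wpM2r ?ltW //; lra.
  lra.
set eta2 := eta / (2 * (M2 * CC alpha + 1)).
have eta20 : 0 < eta2 by rewrite divr_gt0 //; nra.
have M2eta : M2 * (CC alpha * eta2) <= eta / 2.
  rewrite /eta2 mulrA mulrA ler_pdivrMr; last nra.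
  have : M2 * CC alpha * eta <= (M2 * CC alpha + 1) * eta by rewrite ler_wpM2r ?ltW //; lra.
  lra.
have [k hk] : exists k : nat, kap alpha ^+ k <= eta1.
  have cv := @cvg_expr R (kap alpha).
  have : `|kap alpha| < 1 by rewrite ger0_norm.
  move=> /cv /cvgrPdist_le /(_ eta1 eta10) hev.
  have [k hk] := filter_ex hev.
  by exists k; move: hk; rewrite sub0r normrN ger0_norm // exprn_ge0.
have Bk0 : 0 < BB alpha ^+ k by rewrite exprn_gt0.
set eta3 := BB alpha ^+ k / (2 * (CC alpha + 1)).
have eta30 : 0 < eta3 by rewrite divr_gt0 //; lra.
have CCeta3 : CC alpha * eta3 < BB alpha ^+ k.
  rewrite /eta3 mulrA ltr_pdivrMr; last lra.
  nra.
near=> n.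
have Kn : (K n < n)%N by near: n.
have l1 : 1 <= lambda n by near: n.
have l2 : lambda n <= eta2 * n%:R by near: n; exact: lo.
have l3 : lambda n <= eta3 * n%:R by near: n; exact: lo.
have l4 : lambda n <= (1 - alpha) / 3 * n%:R by near: n; apply: lo; lra.
have n0 : (0 < n)%N by lia.
have nR : (0 : R) < n%:R by rewrite ltr0n.
have lam0 : 0 < lambda n by lra.
set g := Num.truncn (alpha * n%:R).
have gle : g%:R <= alpha * n%:R by rewrite truncn_le mulr_ge0 ?ler0n ?ltW.
have gn : (g <= n)%N by rewrite -(ler_nat R); lra.
have hB := BK_bound ha lam0 n0 (hr4 n).
have ln2 : lambda n / n%:R <= eta2 by rewrite ler_pdivrMr.
have ln3 : lambda n / n%:R <= eta3 by rewrite ler_pdivrMr.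
have kK : (k < K n)%N.
  rewrite ltnNge; apply/negP => Kk.
  have : BB alpha ^+ k <= BB alpha ^+ K n by apply: ler_wiXn2l => //; exact: ltW.
  have : CC alpha * (lambda n / n%:R) <= CC alpha * eta3 by apply: ler_wpM2l.
  lra.
have kapK : kap alpha ^+ K n <= eta1.
  apply: (le_trans _ hk); apply: ler_wiXn2l => //; [exact: ltW | exact: ltnW].
have tb := tn_bound ha lam0 n0 hB.
set t := tn alpha (lambda n) n (K n).
have t0 : 0 <= t by exact: tn_ge0.
have tle : t <= eta.
  apply: le_trans tb _.
  have h1 : M1 * kap alpha ^+ K n <= M1 * eta1 by apply: ler_wpM2l.
  have h2 : M2 * (CC alpha * (lambda n / n%:R)) <= M2 * (CC alpha * eta2).
    by apply: ler_wpM2l => //; apply: ler_wpM2l.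
  rewrite -/M1 -/M2; lra.
have hfb := @finite_bound R n (K n) g (lambda n) t Kn gn lam0.
have h3 : 3 * lambda n <= (n - g)%:R by rewrite natrB //; lra.
have ht : 0 <= t <= 1 / 2 by rewrite t0 /=; lra.
have hm : forall m : nat, (1 <= m)%N -> lambda n <= m%:R -> (2 * m <= n - g)%N ->
      'C(n - g, m)%:R * tau R n (K n) g m <= t ^+ m.
  by move=> m m1 lm m2; apply: per_m.
have := hfb h3 ht hm => lb.
have ub := @kout_prob_le1 R n (K n) g (fun w => n%:R - g%:R - lambda n < (cmax_size w)%:R).
rewrite ger0_norm; last by rewrite subr_ge0.
lra.
Unshelve. all: by end_near.
Qed.
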